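(* Let $(A,B)$ be a Katsura pair with KEP-action $(G_B,E_A)$, and let $E^0_{A,<\infty}=\{i\in E^0_A:(G_B)_i\text{ is finite}\}$. If $e\in E_A^1$ satisfies $B_e\ne0$ and $r(e)\in E^0_{A,<\infty}$, then $s(e)\in E^0_{A,<\infty}$.
   Context: Katsura pair: $N\in\mathbb{N}$, $A\in M_N(\mathbb{N})$ (nonnegative integers), $B\in M_N(\mathbb{Z})$ with $A_{ij}=0\Rightarrow B_{ij}=0$. Graph $E_A$: vertices $\{1,\dots,N\}$, edges $e_{i,j,m}$ ($0\le m<A_{ij}$), $r=i$, $s=j$; for an edge $e$, $B_e=B_{r(e)s(e)}$. The group bundle $\mathbb{Z}\times E_A^0$ (elements $a_i^k$, $a_i^ka_i^l=a_i^{k+l}$) acts on finite paths by $a_i^k\cdot e_{i,j,m}=e_{i,j,\hat m}$, $a_i^k|_{e_{i,j,m}}=a_j^{\hat k}$ where $kB_{ij}+m=\hat kA_{ij}+\hat m$, $0\le\hat m<A_{ij}$, extended recursively by $g\cdot(e\nu)=(g\cdot e)(g|_e\cdot\nu)$. $G_B$ is the quotient by the elements acting trivially (the KEP-action $(G_B,E_A)$), and $(G_B)_i$ is the cyclic group of elements of $G_B$ at the vertex $i$. *)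

(* Defs.v *)
From mathcomp Require Import all_boot all_order all_algebra.
Set Implicit Arguments. Unset Strict Implicit. Unset Printing Implicit Defensive.
Import GRing.Theory Num.Theory.
Local Open Scope ring_scope.

(* Katsura pair (A,B) on vertex set 'I_N (vertices 0..N-1 instead of 1..N).
   An edge e_{i,j,m} is encoded as the triple (i, j, m) with r = i, s = j,
   and m < A i j.  A finite path e_1 e_2 ... e_n is the list of its edges,
   with s(e_t) = r(e_{t+1}). *)

Definition edge (N : nat) := ('I_N * 'I_N * nat)%type.

Definition katsura_pair (N : nat) (A : 'M[nat]_N) (B : 'M[int]_N) : Prop :=
  forall i j, A i j = 0%N -> B i j = 0.

Fixpoint is_path_from (N : nat) (A : 'M[nat]_N) (i : 'I_N) (p : seq (edge N)) : bool :=
  match p with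
  | [::] => true
  | (r, s, m) :: q => (r == i) && (m < A r s)%N && is_path_from A s q
  end.

(* action of a_{r(p)}^k on a path p:
   a_i^k . e_{i,j,m} = e_{i,j,mh},  a_i^k|_{e_{i,j,m}} = a_j^{kh},
   where k B_ij + m = kh A_ij + mh, 0 <= mh < A_ij,
   and g . (e nu) = (g . e) (g|_e . nu). *)
Fixpoint kep_act (N : nat) (A : 'M[nat]_N) (B : 'M[int]_N) (k : int)
    (p : seq (edge N)) : seq (edge N) :=
  match p with
  | [::] => [::]
  | (r, s, m) :: q =>
      let x := k * B r s + (m%:Z) in
      (r, s, `|(x %% (A r s)%:Z)%Z|%N) :: kep_act A B (x %/ (A r s)%:Z)%Z q
  end.

Definition acts_trivially (N : nat) (A : 'M[nat]_N) (B : 'M[int]_N)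
    (i : 'I_N) (k : int) : Prop :=
  forall p, is_path_from A i p -> kep_act A B k p = p.

(* (G_B)_i = {a_i^k : k in Z} modulo the elements acting trivially:
   a_i^k and a_i^l are identified iff a_i^(k-l) acts trivially.
   (G_B)_i is finite iff there are finitely many classes. *)
Definition GB_vertex_finite (N : nat) (A : 'M[nat]_N) (B : 'M[int]_N)
    (i : 'I_N) : Prop :=
  exists s : seq int, forall k : int, exists2 l, l \in s & acts_trivially A B i (k - l).

(* Main.v *)
Require Import Defs.
From mathcomp Require Import all_boot all_order all_algebra.
Local Open Scope ring_scope.
Import Order.TTheory GRing.Theory Num.Theory.
Set Implicit Arguments.

Section K.
Variables (N : nat) (A : 'M[nat]_N) (B : 'M[int]_N).

Lemma absz_nonneg (z : int) : 0 <= z -> ((`|z|%N)%:Z) = z.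
Proof. by case: z. Qed.

Lemma kep0 p i : is_path_from A i p -> kep_act A B 0 p = p.
Proof.
elim: p i => [//|[[r s] m] q IH] i /=.
case/andP => /andP [_ hm] hq.
have hA : (0 <= m%:Z < (A r s)%:Z) by rewrite lez_nat ltz_nat hm.
rewrite mul0r add0r modz_small // divz_small; last first.
  by rewrite hA.
by rewrite (IH s hq).
Qed.

Lemma kep_comp p i : is_path_from A i p ->
  forall k l, kep_act A B l (kep_act A B k p) = kep_act A B (k + l) p.
Proof.
elim: p i => [//|[[r s] m] q IH] i /=.
case/andP => /andP [_ hm] hq k l.
have hA0 : (A r s)%:Z != 0 by rewrite eqz_nat -lt0n (leq_ltn_trans (leq0n m) hm).
set x := k * B r s + m%:Z.
rewrite absz_nonneg; last by apply: modz_ge0.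
have ex : (k + l) * B r s + m%:Z = (x %/ (A r s)%:Z)%Z * (A r s)%:Z + (l * B r s + (x %% (A r s)%:Z)%Z).
  by rewrite [in RHS]addrCA -divz_eq /x mulrDl addrCA addrA.
rewrite ex modzMDl divzMDl // (IH s hq).
by [].
Qed.

Lemma triv_opp i c : acts_trivially A B i c -> acts_trivially A B i (- c).
Proof.
move=> h p hp; have := @kep_comp p i hp c (-c).
by rewrite (h p hp) subrr (@kep0 p i hp) => ->.
Qed.

Lemma triv_natmul i c (t : nat) : acts_trivially A B i c -> acts_trivially A B i (t%:Z * c).
Proof.
move=> h; elim: t => [|t IHt] p hp; first by rewrite mul0r (@kep0 p i hp).
rewrite -addn1 PoszD mulrDl mul1r; have := @kep_comp p i hp (t%:Z * c) c.
by rewrite (IHt p hp) (h p hp) => <-.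
Qed.

Lemma triv_mul i c (t : int) : acts_trivially A B i c -> acts_trivially A B i (t * c).
Proof.
move=> h; case: t => t.
  exact: triv_natmul.
rewrite NegzE mulNr; apply: triv_opp; exact: triv_natmul.
Qed.

End K.

Theorem corollary3p1 (N : nat) (A : 'M[nat]_N) (B : 'M[int]_N) :
  katsura_pair A B ->
  forall (i j : 'I_N) (m : nat),
    (m < A i j)%N ->            (* e = e_{i,j,m} is an edge, r(e) = i, s(e) = j *)
    B i j != 0 ->               (* B_e <> 0 *)
    GB_vertex_finite A B i ->   (* r(e) in E^0_{A,<oo} *)
    GB_vertex_finite A B j.     (* s(e) in E^0_{A,<oo} *)
Proof.
move=> _ i j m hm hB [s hs].
pose K : int := 1 + \sum_(l <- s) `|l|.
have [l ls hl] := hs K.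
have hn : K - l != 0.
  rewrite subr_eq0; apply/negP => /eqP hK.
  have : l <= \sum_(l <- s) `|l|.
    apply: (le_trans (ler_norm l)).
    rewrite (big_rem l ls) /=; rewrite lerDl; apply: sumr_ge0 => *; exact: normr_ge0.
  by rewrite -hK /K -{2}[\sum_(_ <- _) _]add0r lerD2r.
set n := K - l in hn hl.
have hA0 : (A i j)%:Z != 0 by rewrite eqz_nat -lt0n (leq_ltn_trans (leq0n m) hm).
have hd : acts_trivially A B j (n * B i j).
  move=> q hq.
  have hp : is_path_from A i ((i, j, m) :: q) by rewrite /= eqxx hm hq.
  have := @triv_mul _ A B i n (A i j)%:Z hl _ hp => /=.
  have e : (A i j)%:Z * n * B i j + m%:Z = (n * B i j) * (A i j)%:Z + m%:Z.
    by rewrite -mulrA [(A i j)%:Z * _]mulrC.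
  rewrite e modzMDl divzMDl // divz_small; last first.
    by rewrite lez_nat ltz_nat.
  rewrite modz_small ?lez_nat ?ltz_nat // addr0; by case.
have hd0 : n * B i j != 0 by rewrite mulf_neq0.
exists (map Posz (iota 0 (absz (n * B i j)))); move=> k.
exists (k %% (n * B i j))%Z.
  apply/mapP; exists (absz (k %% (n * B i j))%Z).
    rewrite mem_iota add0n /=.
    rewrite -ltz_nat absz_nonneg ?modz_ge0 //.
    by rewrite abszE; apply: ltz_mod.
  by rewrite absz_nonneg ?modz_ge0.
have -> : k - (k %% (n * B i j))%Z = (k %/ (n * B i j))%Z * (n * B i j).
  by rewrite {1}(divz_eq k (n * B i j)) addrK.
exact: triv_mul.
Qed.
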